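(* Let $m\ge1$ and $0\le k\le m$. In $G_{m,k}$ put $A_i=a_{i+1}^{-1}a_i$ for $1\le i\le m$ and $B_j=a_{m+j+1}^{-1}a_j$ for $1\le j\le k$. Then the elements $A_1,\dots,A_m,B_1,\dots,B_k$ freely generate a free normal subgroup $F_{m+k}$ (the kernel of the homomorphism $G_{m,k}\to\mathbb Z$ sending every $a_i$ to $1$), and $G_{m,k}\cong F_{m+k}\rtimes_{\phi_{m,k}}\mathbb Z$ with $\mathbb Z=\langle a_1\rangle$, where the monodromy automorphism $\phi_{m,k}(x)=a_1xa_1^{-1}$ is given by $\phi_{m,k}(A_i)=A_1A_2\cdots A_{i-1}\,A_i\,A_{i-1}^{-1}\cdots A_1^{-1}$ for $1\le i\le m$ (so $\phi_{m,k}(A_1)=A_1$), and $\phi_{m,k}(B_j)=A_1A_2\cdots A_m\,(B_1B_2\cdots B_j)\,A_{j-1}^{-1}A_{j-2}^{-1}\cdots A_1^{-1}$ for $1\le j\le k$ (so $\phi_{m,k}(B_1)=A_1\cdots A_mB_1$). Furthermore, $\phi_{m,k}$ is the restriction of $\phi_{m,m}$ to $F_{m+k}$.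
   Context: $G_{m,k}=\langle a_1,\dots,a_{m+k+1}\mid [a_i,a_{i+1}]=1\ (1\le i\le m),\ a_{m+j+1}^{-1}a_ja_{m+j+1}=a_{m+j}\ (1\le j\le k)\rangle$. *)

(* Defs.v *)
From Stdlib Require Import ZArith Arith.

Record group := Group {
  gcar :> Type;
  gmul : gcar -> gcar -> gcar;
  gone : gcar;
  ginv : gcar -> gcar;
  gmulA : forall x y z, gmul x (gmul y z) = gmul (gmul x y) z;
  gmul1 : forall x, gmul gone x = x;
  gmulg1 : forall x, gmul x gone = x;
  gmulV : forall x, gmul (ginv x) x = gone;
  gmulgV : forall x, gmul x (ginv x) = gone
}.
Arguments gmul {g}. Arguments gone {g}. Arguments ginv {g}.

Definition is_hom (G H : group) (f : G -> H) : Prop :=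
  forall x y : G, f (gmul x y) = gmul (f x) (f y).

Fixpoint npow {G : group} (x : G) (n : nat) : G :=
  match n with 0 => gone | S n => gmul (npow x n) x end.
Definition zpow {G : group} (x : G) (z : Z) : G :=
  match z with
  | Z0 => gone
  | Zpos p => npow x (Pos.to_nat p)
  | Zneg p => ginv (npow x (Pos.to_nat p))
  end.

Fixpoint gprod {G : group} (f : nat -> G) (n : nat) : G :=
  match n with 0 => gone | S n => gmul (gprod f n) (f (S n)) end.

Inductive gen {G : group} (S : G -> Prop) : G -> Prop :=
  | gen_base x : S x -> gen S x
  | gen_one : gen S gone
  | gen_mul x y : gen S x -> gen S y -> gen S (gmul x y)
  | gen_inv x : gen S x -> gen S (ginv x).

Definition gen_fam {G : group} (n : nat) (s : nat -> G) : G -> Prop :=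
  gen (fun x => exists i, i < n /\ x = s i).

Definition freely_generates {G : group} (n : nat) (s : nat -> G) : Prop :=
  forall (H : group) (t : nat -> H),
    (exists f : G -> H,
       (forall x y, gen_fam n s x -> gen_fam n s y -> f (gmul x y) = gmul (f x) (f y))
       /\ (forall i, i < n -> f (s i) = t i))
    /\ (forall f1 f2 : G -> H,
          (forall x y, gen_fam n s x -> gen_fam n s y -> f1 (gmul x y) = gmul (f1 x) (f1 y)) ->
          (forall x y, gen_fam n s x -> gen_fam n s y -> f2 (gmul x y) = gmul (f2 x) (f2 y)) ->
          (forall i, i < n -> f1 (s i) = t i) ->
          (forall i, i < n -> f2 (s i) = t i) ->
          forall x, gen_fam n s x -> f1 x = f2 x).

Definition Gmk_rels (m k : nat) (G : group) (a : nat -> G) : Prop :=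
  (forall i, 1 <= i <= m -> gmul (a i) (a (i + 1)) = gmul (a (i + 1)) (a i)) /\
  (forall j, 1 <= j <= k ->
     gmul (gmul (ginv (a (m + j + 1))) (a j)) (a (m + j + 1)) = a (m + j)).

Definition presents_Gmk (m k : nat) (G : group) (a : nat -> G) : Prop :=
  Gmk_rels m k G a /\
  forall (H : group) (b : nat -> H), Gmk_rels m k H b ->
    (exists f : G -> H, is_hom G H f /\ forall i, 1 <= i <= m + k + 1 -> f (a i) = b i) /\
    (forall f1 f2 : G -> H, is_hom G H f1 -> is_hom G H f2 ->
       (forall i, 1 <= i <= m + k + 1 -> f1 (a i) = b i) ->
       (forall i, 1 <= i <= m + k + 1 -> f2 (a i) = b i) ->
       forall x, f1 x = f2 x).

Definition Aelt {G : group} (a : nat -> G) (i : nat) : G := gmul (ginv (a (i + 1))) (a i).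
Definition Belt {G : group} (m : nat) (a : nat -> G) (j : nat) : G :=
  gmul (ginv (a (m + j + 1))) (a j).

(** The family (0-indexed) A_1, ..., A_m, B_1, ..., B_k *)
Definition basis {G : group} (m : nat) (a : nat -> G) (i : nat) : G :=
  if i <? m then Aelt a (i + 1) else Belt m a (i - m + 1).

Definition conj1 {G : group} (a : nat -> G) (x : G) : G := gmul (gmul (a 1) x) (ginv (a 1)).

(* Main.v *)
Require Import Defs.
From Stdlib Require Import ZArith Arith Lia List Bool Eqdep_dec.
Import ListNotations.

Lemma g_canc1 (G : group) (a x : G) : gmul (gmul a x) (ginv x) = a.
Proof. rewrite <- gmulA, gmulgV, gmulg1. reflexivity. Qed.
Lemma g_canc2 (G : group) (a x : G) : gmul (gmul a (ginv x)) x = a.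
Proof. rewrite <- gmulA, gmulV, gmulg1. reflexivity. Qed.
Lemma g_lcancel (G : group) (x y z : G) : gmul x y = gmul x z -> y = z.
Proof. intro H. rewrite <- (gmul1 _ y), <- (gmul1 _ z), <- (gmulV _ x), <- !gmulA, H. reflexivity. Qed.
Lemma g_rcancel (G : group) (x y z : G) : gmul y x = gmul z x -> y = z.
Proof. intro H. rewrite <- (g_canc1 _ y x), <- (g_canc1 _ z x), H. reflexivity. Qed.
Lemma g_inv_uniq (G : group) (x y : G) : gmul x y = gone -> ginv x = y.
Proof. intro H. apply (g_lcancel _ x). rewrite gmulgV, H. reflexivity. Qed.
Lemma g_inv_mul (G : group) (x y : G) : ginv (gmul x y) = gmul (ginv y) (ginv x).
Proof. apply g_inv_uniq. rewrite !gmulA, g_canc1, gmulgV. reflexivity. Qed.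
Lemma g_inv_inv (G : group) (x : G) : ginv (ginv x) = x.
Proof. apply g_inv_uniq. apply gmulV. Qed.
Lemma g_inv_one (G : group) : ginv (@gone G) = gone.
Proof. apply g_inv_uniq. apply gmul1. Qed.

Ltac gsimpl := repeat (rewrite ?g_inv_mul, ?g_inv_inv, ?g_inv_one, ?gmulA, ?gmulV, ?gmulgV,
   ?gmul1, ?gmulg1, ?g_canc1, ?g_canc2).

Lemma g_test (G : group) (a b c : G) :
  gmul (gmul a (ginv (gmul b c))) (gmul b (gmul c (ginv a))) = gone.
Proof. gsimpl. reflexivity. Qed.

Lemma hom_one (G K : group) (f : G -> K) : f (gmul gone gone) = gmul (f gone) (f gone) -> f gone = gone.
Proof. rewrite gmul1. intro H. apply (g_lcancel _ (f gone)). rewrite gmulg1. symmetry. exact H. Qed.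

Lemma hom_inv (G K : group) (f : G -> K) (x : G) :
  f gone = gone -> f (gmul (ginv x) x) = gmul (f (ginv x)) (f x) -> f (ginv x) = ginv (f x).
Proof. rewrite gmulV. intros H1 H2. apply (g_rcancel _ (f x)). rewrite gmulV, <- H2, H1. reflexivity. Qed.

Lemma gen_hom_unique (G K : group) (S : G -> Prop) (f1 f2 : G -> K) :
  (forall x y, gen S x -> gen S y -> f1 (gmul x y) = gmul (f1 x) (f1 y)) ->
  (forall x y, gen S x -> gen S y -> f2 (gmul x y) = gmul (f2 x) (f2 y)) ->
  (forall x, S x -> f1 x = f2 x) -> forall x, gen S x -> f1 x = f2 x.
Proof.
  intros H1 H2 HS x Hx.
  assert (E1 : f1 gone = gone) by (apply hom_one, H1; constructor).
  assert (E2 : f2 gone = gone) by (apply hom_one, H2; constructor).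
  induction Hx.
  - auto.
  - congruence.
  - rewrite H1, H2 by assumption. congruence.
  - rewrite (hom_inv _ _ f1), (hom_inv _ _ f2); try assumption.
    + congruence.
    + apply H2; [constructor 4|]; assumption.
    + apply H1; [constructor 4|]; assumption.
Qed.

Lemma gen_mono (G : group) (S T : G -> Prop) : (forall x, S x -> gen T x) -> forall x, gen S x -> gen T x.
Proof. intros H x Hx. induction Hx; [auto|constructor 2|constructor 3; auto|constructor 4; auto]. Qed.

Definition ltr := (nat * bool)%type.
Definition linv (l : ltr) : ltr := (fst l, negb (snd l)).
Definition leqb (l1 l2 : ltr) : bool := Nat.eqb (fst l1) (fst l2) && Bool.eqb (snd l1) (snd l2).
Lemma leqb_spec l1 l2 : leqb l1 l2 = true <-> l1 = l2.
Proof.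
  destruct l1 as [n1 b1], l2 as [n2 b2]; unfold leqb; simpl.
  rewrite andb_true_iff, Nat.eqb_eq, eqb_true_iff. split; [intros [-> ->]; auto | intro H; inversion H; auto].
Qed.
Lemma linv_inv l : linv (linv l) = l.
Proof. destruct l; unfold linv; simpl; rewrite negb_involutive; reflexivity. Qed.

Definition cred (l : ltr) (w : list ltr) : list ltr :=
  match w with
  | h :: t => if leqb h (linv l) then t else l :: w
  | [] => [l]
  end.

Fixpoint red (w : list ltr) : bool :=
  match w with
  | h1 :: ((h2 :: _) as t) => negb (leqb h2 (linv h1)) && red t
  | _ => true
  end.

Lemma red_tail h t : red (h :: t) = true -> red t = true.
Proof. destruct t; simpl; auto. rewrite andb_true_iff. tauto. Qed.

Lemma red_cred l w : red w = true -> red (cred l w) = true.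
Proof.
  intro H. destruct w as [|h t]; simpl; auto.
  destruct (leqb h (linv l)) eqn:E.
  - eapply red_tail; eauto.
  - simpl. rewrite E. simpl. exact H.
Qed.

Lemma cred_cancel l w : red w = true -> cred (linv l) (cred l w) = w.
Proof.
  intro H. destruct w as [|h t]; simpl.
  - rewrite linv_inv. destruct (leqb l l) eqn:E; auto. exfalso. assert (l = l) by auto. apply leqb_spec in H0. congruence.
  - destruct (leqb h (linv l)) eqn:E.
    + apply leqb_spec in E. subst h.
      destruct t as [|h2 t]; simpl.
      * reflexivity.
      * simpl in H. rewrite linv_inv in H. apply andb_true_iff in H. destruct H as [H1 _].
        rewrite linv_inv. destruct (leqb h2 l) eqn:E2; simpl in H1; [discriminate|]. reflexivity.
    + simpl. rewrite linv_inv. destruct (leqb l l) eqn:E2; auto.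
      exfalso. assert (l = l) by auto. apply leqb_spec in H0. congruence.
Qed.

Definition act (u w : list ltr) : list ltr := fold_right cred w u.

Lemma red_act u w : red w = true -> red (act u w) = true.
Proof. induction u; simpl; auto. intro H. apply red_cred. auto. Qed.

Lemma act_cred l v w : red w = true -> act (cred l v) w = cred l (act v w).
Proof.
  intro H. destruct v as [|h t]; simpl; auto.
  destruct (leqb h (linv l)) eqn:E; simpl; auto.
  apply leqb_spec in E. subst h.
  rewrite <- (linv_inv l) at 1. rewrite cred_cancel; auto. apply red_act; auto.
Qed.

Lemma act_assoc u v w : red w = true -> act (act u v) w = act u (act v w).
Proof.
  intro H. induction u; simpl; auto.
  rewrite act_cred by auto. rewrite IHu. reflexivity.
Qed.

Lemma act_nil_r w : red w = true -> act w [] = w.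
Proof.
  induction w as [|h t IH]; simpl; auto.
  intro H. rewrite IH by (eapply red_tail; eauto).
  destruct t as [|h2 t]; simpl; auto.
  simpl in H. apply andb_true_iff in H. destruct H as [H1 _].
  destruct (leqb h2 (linv h)); simpl in H1; [discriminate|reflexivity].
Qed.

Definition winv (w : list ltr) : list ltr := rev (map linv w).

Lemma act_winv w : red w = true -> act (winv w) w = [].
Proof.
  induction w as [|h t IH]; simpl; auto.
  intro H. unfold winv in *. simpl. unfold act in *. rewrite fold_right_app. simpl.
  rewrite linv_inv. assert (E : leqb h h = true) by (apply leqb_spec; auto). rewrite E.
  apply IH. eapply red_tail; eauto.
Qed.

Lemma red_snoc2 x z y : red (x ++ [z]) = true -> leqb y (linv z) = false -> red (x ++ [z; y]) = true.
Proof.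
  induction x as [|h t IH]; intros H1 H2.
  - simpl. rewrite H2. reflexivity.
  - destruct t as [|h2 t].
    + simpl in *. rewrite H2. rewrite andb_true_r in *. exact H1.
    + simpl in *. apply andb_true_iff in H1. destruct H1 as [H1 H3].
      rewrite H1. simpl. apply IH; auto.
Qed.

Lemma leqb_linv a b : leqb (linv a) (linv b) = leqb a b.
Proof.
  destruct (leqb a b) eqn:E.
  - apply leqb_spec in E. subst. apply leqb_spec. auto.
  - destruct (leqb (linv a) (linv b)) eqn:E2; auto. apply leqb_spec in E2.
    rewrite <- (linv_inv a), E2, linv_inv in E. assert (b = b) by auto. apply leqb_spec in H. congruence.
Qed.

Lemma leqb_sym a b : leqb a b = leqb b a.
Proof.
  destruct (leqb a b) eqn:E.
  - apply leqb_spec in E. subst. symmetry. apply leqb_spec. auto.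
  - destruct (leqb b a) eqn:E2; auto. apply leqb_spec in E2. subst.
    assert (a = a) by auto. apply leqb_spec in H. congruence.
Qed.

Lemma red_winv w : red w = true -> red (winv w) = true.
Proof.
  induction w as [|h t IH]; simpl; auto.
  intro H. unfold winv in *. simpl. destruct t as [|h2 t].
  - reflexivity.
  - apply andb_true_iff in H. destruct H as [H Ht].
    pose proof (IH Ht) as IH'. simpl in IH'. simpl. rewrite <- app_assoc. simpl. apply red_snoc2.
    + exact IH'.
    + 
      destruct (leqb h2 (linv h)) eqn:E; simpl in H; [discriminate|].
      match goal with |- ?b = false => destruct b eqn:E2; auto end.
      apply leqb_spec in E2. rewrite linv_inv in E2. rewrite <- (linv_inv h), E2 in E.
      assert (h2 = h2) as R by auto. apply leqb_spec in R. rewrite linv_inv in E. congruence.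
Qed.

Definition FGt := { w : list ltr | red w = true }.

Lemma FG_eq (x y : FGt) : proj1_sig x = proj1_sig y -> x = y.
Proof.
  destruct x as [x hx], y as [y hy]; simpl. intro E. subst y. f_equal. apply UIP_dec. apply bool_dec.
Qed.

Definition FGmul (x y : FGt) : FGt :=
  exist _ (act (proj1_sig x) (proj1_sig y)) (red_act _ _ (proj2_sig y)).
Definition FGone : FGt := exist _ [] eq_refl.
Definition FGinv (x : FGt) : FGt := exist _ (winv (proj1_sig x)) (red_winv _ (proj2_sig x)).

Lemma FGmulA x y z : FGmul x (FGmul y z) = FGmul (FGmul x y) z.
Proof. apply FG_eq. simpl. rewrite act_assoc; auto. apply (proj2_sig z). Qed.
Lemma FGmul1 x : FGmul FGone x = x.
Proof. apply FG_eq. reflexivity. Qed.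
Lemma FGmulg1 x : FGmul x FGone = x.
Proof. apply FG_eq. simpl. apply act_nil_r. apply (proj2_sig x). Qed.
Lemma FGmulV x : FGmul (FGinv x) x = FGone.
Proof. apply FG_eq. simpl. apply act_winv. apply (proj2_sig x). Qed.
Lemma winv_winv w : winv (winv w) = w.
Proof. unfold winv. rewrite map_rev, rev_involutive, map_map. 
  rewrite (map_ext _ (fun x => x)) by apply linv_inv. apply map_id. Qed.
Lemma FGmulgV x : FGmul x (FGinv x) = FGone.
Proof. apply FG_eq. simpl. rewrite <- (winv_winv (proj1_sig x)) at 1. apply act_winv.
  apply red_winv, (proj2_sig x). Qed.

Definition FG : group := Group FGt FGmul FGone FGinv FGmulA FGmul1 FGmulg1 FGmulV FGmulgV.

Definition ev_ltr {K : group} (t : nat -> K) (l : ltr) : K :=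
  if snd l then ginv (t (fst l)) else t (fst l).
Definition ev_list {K : group} (t : nat -> K) (w : list ltr) : K :=
  fold_right (fun l acc => gmul (ev_ltr t l) acc) gone w.
Definition ev {K : group} (t : nat -> K) (x : FG) : K := ev_list t (proj1_sig x).

Lemma ev_ltr_linv {K : group} (t : nat -> K) l : gmul (ev_ltr t l) (ev_ltr t (linv l)) = gone.
Proof. destruct l as [n []]; unfold ev_ltr, linv; simpl; [apply gmulV|apply gmulgV]. Qed.

Lemma ev_list_cred {K : group} (t : nat -> K) l w :
  ev_list t (cred l w) = gmul (ev_ltr t l) (ev_list t w).
Proof.
  destruct w as [|h r]; simpl; auto.
  destruct (leqb h (linv l)) eqn:E; simpl; auto.
  apply leqb_spec in E. subst h. rewrite gmulA, ev_ltr_linv, gmul1. reflexivity.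
Qed.

Lemma ev_list_act {K : group} (t : nat -> K) u w :
  ev_list t (act u w) = gmul (ev_list t u) (ev_list t w).
Proof.
  induction u as [|h r IH]; simpl. - rewrite gmul1; auto.
  - rewrite ev_list_cred. fold (act r w). rewrite IH. apply gmulA.
Qed.

Lemma ev_hom {K : group} (t : nat -> K) : is_hom FG K (ev t).
Proof. intros x y. unfold ev. simpl. apply ev_list_act. Qed.

Definition of (n : nat) : FG := exist (fun w => red w = true) [(n, false)] eq_refl.

Lemma ev_of {K : group} (t : nat -> K) n : ev t (of n) = t n.
Proof. unfold ev, of; simpl. apply gmulg1. Qed.

Definition letters : FG -> Prop := fun y => exists n, y = of n.

Lemma FG_gen (x : FG) : gen letters x.
Proof.
  destruct x as [w hw].
  induction w as [|h r IH].
  - assert (E : exist (fun w => red w = true) [] hw = @gone FG) by (apply FG_eq; reflexivity).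
    rewrite E. constructor 2.
  - assert (hr : red r = true) by (eapply red_tail; eauto).
    assert (E : exist (fun w => red w = true) (h :: r) hw =
                @gmul FG (if snd h then ginv (of (fst h)) else of (fst h)) (exist _ r hr)).
    { apply FG_eq. simpl. destruct h as [n []]; simpl.
      all: destruct r as [|h2 r]; simpl; auto;
        unfold linv in *; simpl in *; destruct (leqb h2 _) eqn:E; simpl in hw; [discriminate|reflexivity]. }
    rewrite E. constructor 3; [|apply IH].
    destruct (snd h); [constructor 4|]; constructor 1; eexists; reflexivity.
Qed.

Lemma ev_unique {K : group} (f1 f2 : FG -> K) :
  is_hom FG K f1 -> is_hom FG K f2 -> (forall n, f1 (of n) = f2 (of n)) -> forall x, f1 x = f2 x.
Proof.
  intros H1 H2 H x. apply (gen_hom_unique FG K letters); auto.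
  - intros y [n ->]. auto.
  - apply FG_gen.
Qed.

Lemma ev_char {K : group} (t : nat -> K) (f : FG -> K) :
  is_hom FG K f -> (forall n, f (of n) = t n) -> forall x, f x = ev t x.
Proof. intros H E. apply ev_unique; auto. apply ev_hom. intro n. rewrite ev_of. auto. Qed.

Lemma hom_one' (G K : group) (f : G -> K) : is_hom G K f -> f gone = gone.
Proof. intro H. apply hom_one. apply H. Qed.
Lemma hom_inv' (G K : group) (f : G -> K) x : is_hom G K f -> f (ginv x) = ginv (f x).
Proof. intro H. apply hom_inv; [apply hom_one'; auto| apply H]. Qed.

Lemma ev_in_gen {K : group} (t : nat -> K) (S : K -> Prop) :
  (forall n, gen S (t n)) -> forall x, gen S (ev t x).
Proof.
  intros H x. pose proof (FG_gen x) as Hx. induction Hx.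
  - destruct H0 as [n ->]. rewrite ev_of. auto.
  - rewrite hom_one' by apply ev_hom. constructor 2.
  - rewrite ev_hom. constructor 3; auto.
  - rewrite hom_inv' by apply ev_hom. constructor 4; auto.
Qed.

Definition sg (m n : nat) : nat := if n <=? m then n else n - m.
Definition dd (n : nat) : FG := if 2 <=? n then of n else gone.
Fixpoint ee (m n : nat) : FG :=
  match n with
  | 0 => gone
  | S n' => gmul (gmul (ee m n') (dd n)) (ginv (dd (sg m n')))
  end.
Fixpoint gg (n : nat) : FG :=
  match n with
  | 0 => gone
  | S n' => gmul (gmul (ginv (dd n')) (dd n)) (gg n')
  end.
Definition ff (m n : nat) : FG :=
  if n <=? m + 1 then gg n else gmul (gmul (ginv (dd (n - 1))) (dd n)) (gg (n - 1 - m)).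

Definition inr (m k n : nat) : bool := (2 <=? n) && (n <=? m + k + 1).
Definition phil (m k n : nat) : FG := if inr m k n then ee m n else of n.
Definition psil (m k n : nat) : FG := if inr m k n then ff m n else of n.
Definition phi (m k : nat) : FG -> FG := ev (phil m k).
Definition psi (m k : nat) : FG -> FG := ev (psil m k).

Lemma dd01 n : n <= 1 -> dd n = gone.
Proof. intro H. unfold dd. destruct (2 <=? n) eqn:E; auto. apply Nat.leb_le in E. lia. Qed.

Lemma phi_dd m k n : n <= m + k + 1 -> phi m k (dd n) = ee m n.
Proof.
  intro H. destruct (Nat.le_gt_cases n 1) as [H1|H1].
  - rewrite dd01 by auto. unfold phi. rewrite hom_one' by apply ev_hom.
    destruct n as [|[|n]]; cbn [ee gg]; [reflexivity| |lia]. rewrite !dd01 by lia. gsimpl. reflexivity.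
  - unfold dd. replace (2 <=? n) with true by (symmetry; apply Nat.leb_le; lia).
    unfold phi. rewrite ev_of. unfold phil, inr.
    replace ((2 <=? n) && (n <=? m + k + 1)) with true by (symmetry; apply andb_true_iff; split; apply Nat.leb_le; lia).
    reflexivity.
Qed.

Lemma psi_dd m k n : n <= m + k + 1 -> psi m k (dd n) = ff m n.
Proof.
  intro H. destruct (Nat.le_gt_cases n 1) as [H1|H1].
  - rewrite dd01 by auto. unfold psi. rewrite hom_one' by apply ev_hom.
    unfold ff. replace (n <=? m + 1) with true by (symmetry; apply Nat.leb_le; lia).
    destruct n as [|[|n]]; cbn [ee gg]; [reflexivity| |lia]. rewrite !dd01 by lia. gsimpl. reflexivity.
  - unfold dd. replace (2 <=? n) with true by (symmetry; apply Nat.leb_le; lia).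
    unfold psi. rewrite ev_of. unfold psil, inr.
    replace ((2 <=? n) && (n <=? m + k + 1)) with true by (symmetry; apply andb_true_iff; split; apply Nat.leb_le; lia).
    reflexivity.
Qed.

Lemma sg_le m n : sg m n <= n.
Proof. unfold sg. destruct (n <=? m); lia. Qed.

Lemma ff_S m k n : k <= m -> n + 1 <= m + k + 1 ->
  ff m (S n) = gmul (gmul (ginv (dd n)) (dd (S n))) (ff m (sg m n)).
Proof.
  intros hk H. unfold ff, sg.
  destruct (n <=? m) eqn:E.
  - apply Nat.leb_le in E.
    replace (S n <=? m + 1) with true by (symmetry; apply Nat.leb_le; lia).
    replace (n <=? m + 1) with true by (symmetry; apply Nat.leb_le; lia). reflexivity.
  - apply Nat.leb_gt in E.
    replace (S n <=? m + 1) with false by (symmetry; apply Nat.leb_gt; lia).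
    replace (n - m <=? m + 1) with true by (symmetry; apply Nat.leb_le; lia).
    replace (S n - 1) with n by lia. replace (S n - 1 - m) with (n - m) by lia. reflexivity.
Qed.

Lemma psi_ee m k n : k <= m -> n <= m + k + 1 -> psi m k (ee m n) = dd n.
Proof.
  intros hk. induction n as [|n IH]; intro H.
  - unfold psi. cbn [ee]. apply hom_one'. apply ev_hom.
  - cbn [ee]. unfold psi. rewrite !ev_hom, hom_inv' by apply ev_hom. fold (psi m k).
    rewrite IH by lia. rewrite !psi_dd by (pose proof (sg_le m n); lia).
    rewrite ff_S with (k := k) by lia. gsimpl. reflexivity.
Qed.

Lemma phi_ff m k n : k <= m -> n <= m + k + 1 -> phi m k (ff m n) = dd n.
Proof.
  intros hk. induction n as [n IH] using (well_founded_induction lt_wf). intro H.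
  destruct n as [|n].
  - unfold ff. cbn [Nat.leb gg]. unfold phi. apply hom_one'. apply ev_hom.
  - rewrite ff_S with (k := k) by lia. unfold phi. rewrite !ev_hom, hom_inv' by apply ev_hom.
    fold (phi m k). rewrite IH by (pose proof (sg_le m n); lia).
    rewrite !phi_dd by lia. cbn [ee]. gsimpl. reflexivity.
Qed.

Lemma psi_phi m k x : k <= m -> psi m k (phi m k x) = x.
Proof.
  intro hk. revert x. apply (ev_unique (fun x => psi m k (phi m k x)) (fun x => x)).
  - intros x y. unfold phi, psi. rewrite !ev_hom. reflexivity.
  - intros x y. reflexivity.
  - intro n. unfold phi at 1. rewrite ev_of. unfold phil.
    destruct (inr m k n) eqn:E.
    + unfold inr in E. apply andb_true_iff in E. destruct E as [E1 E2]. apply Nat.leb_le in E1, E2.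
      rewrite psi_ee by lia. unfold dd. replace (2 <=? n) with true by (symmetry; apply Nat.leb_le; lia). reflexivity.
    + unfold psi. rewrite ev_of. unfold psil. rewrite E. reflexivity.
Qed.

Lemma phi_psi m k x : k <= m -> phi m k (psi m k x) = x.
Proof.
  intro hk. revert x. apply (ev_unique (fun x => phi m k (psi m k x)) (fun x => x)).
  - intros x y. unfold phi, psi. rewrite !ev_hom. reflexivity.
  - intros x y. reflexivity.
  - intro n. unfold psi at 1. rewrite ev_of. unfold psil.
    destruct (inr m k n) eqn:E.
    + unfold inr in E. apply andb_true_iff in E. destruct E as [E1 E2]. apply Nat.leb_le in E1, E2.
      rewrite phi_ff with (k := k) by lia. unfold dd. replace (2 <=? n) with true by (symmetry; apply Nat.leb_le; lia). reflexivity.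
    + unfold phi. rewrite ev_of. unfold phil. rewrite E. reflexivity.
Qed.

Definition zit {T : Type} (p q : T -> T) (z : Z) (x : T) : T :=
  if (0 <=? z)%Z then Nat.iter (Z.to_nat z) p x else Nat.iter (Z.to_nat (- z)) q x.

Lemma zit_neg {T : Type} (p q : T -> T) z x : (z <= 0)%Z -> zit p q z x = Nat.iter (Z.to_nat (- z)) q x.
Proof.
  intro H. unfold zit. destruct (0 <=? z)%Z eqn:E; auto.
  apply Z.leb_le in E. replace z with 0%Z by lia. reflexivity.
Qed.

Lemma zit_succ {T : Type} (p q : T -> T) (pq : forall x, p (q x) = x) z x :
  zit p q (Z.succ z) x = p (zit p q z x).
Proof.
  destruct (Z.le_gt_cases 0 z) as [H|H].
  - unfold zit. replace (0 <=? Z.succ z)%Z with true by (symmetry; apply Z.leb_le; lia).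
    replace (0 <=? z)%Z with true by (symmetry; apply Z.leb_le; lia).
    rewrite Z2Nat.inj_succ by lia. apply Nat.iter_succ.
  - rewrite !zit_neg by lia. replace (Z.to_nat (- z)) with (S (Z.to_nat (- Z.succ z))) by lia.
    rewrite Nat.iter_succ. rewrite pq. reflexivity.
Qed.

Lemma zit_pred {T : Type} (p q : T -> T) (qp : forall x, q (p x) = x) z x :
  zit p q (Z.pred z) x = q (zit p q z x).
Proof.
  destruct (Z.le_gt_cases z 0) as [H|H].
  - rewrite !zit_neg by lia. replace (Z.to_nat (- Z.pred z)) with (S (Z.to_nat (- z))) by lia.
    apply Nat.iter_succ.
  - unfold zit. replace (0 <=? Z.pred z)%Z with true by (symmetry; apply Z.leb_le; lia).
    replace (0 <=? z)%Z with true by (symmetry; apply Z.leb_le; lia).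
    replace (Z.to_nat z) with (S (Z.to_nat (Z.pred z))) by lia.
    rewrite Nat.iter_succ. rewrite qp. reflexivity.
Qed.

Lemma zit_add {T : Type} (p q : T -> T) (pq : forall x, p (q x) = x) (qp : forall x, q (p x) = x) z1 z2 x :
  zit p q (z1 + z2) x = zit p q z1 (zit p q z2 x).
Proof.
  revert x. induction z1 using Z.peano_ind; intro x.
  - reflexivity.
  - replace (Z.succ z1 + z2)%Z with (Z.succ (z1 + z2)) by lia.
    rewrite !zit_succ by auto. rewrite IHz1. reflexivity.
  - replace (Z.pred z1 + z2)%Z with (Z.pred (z1 + z2)) by lia.
    rewrite !zit_pred by auto. rewrite IHz1. reflexivity.
Qed.

Lemma zit_zero {T : Type} (p q : T -> T) x : zit p q 0 x = x.
Proof. reflexivity. Qed.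

Lemma zit_hom (K : group) (p q : K -> K) : is_hom K K p -> is_hom K K q -> forall z, is_hom K K (zit p q z).
Proof.
  intros Hp Hq z x y. unfold zit. destruct (0 <=? z)%Z;
  [generalize (Z.to_nat z) | generalize (Z.to_nat (-z))]; intro n; induction n; simpl; auto;
  rewrite IHn; auto.
Qed.

(* the semidirect product FG x| Z *)
Definition pz (m k : nat) : Z -> FG -> FG := zit (phi m k) (psi m k).

Lemma pz_hom m k z : is_hom FG FG (pz m k z).
Proof. apply zit_hom; intros x y; apply ev_hom. Qed.

Lemma pz_add m k (hk : k <= m) z1 z2 x : pz m k (z1 + z2) x = pz m k z1 (pz m k z2 x).
Proof. apply zit_add; intro; [apply phi_psi|apply psi_phi]; auto. Qed.

Definition Ht := (FGt * Z)%type.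
Definition Hmul (m k : nat) (x y : Ht) : Ht :=
  (@gmul FG (fst x) (pz m k (snd x) (fst y)), (snd x + snd y)%Z).
Definition Hone : Ht := (@gone FG, 0%Z).
Definition Hinv (m k : nat) (x : Ht) : Ht := (pz m k (- snd x) (@ginv FG (fst x)), (- snd x)%Z).

Lemma HmulA m k (hk : k <= m) x y z : Hmul m k x (Hmul m k y z) = Hmul m k (Hmul m k x y) z.
Proof.
  destruct x as [x1 x2], y as [y1 y2], z as [z1 z2]. unfold Hmul; cbn [fst snd].
  f_equal; [|lia]. rewrite pz_hom, pz_add by auto. apply gmulA.
Qed.
Lemma Hmul1 m k x : Hmul m k Hone x = x.
Proof. destruct x as [x1 x2]. unfold Hmul, Hone; cbn [fst snd]. f_equal. apply gmul1. Qed.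
Lemma Hmulg1 m k x : Hmul m k x Hone = x.
Proof. destruct x as [x1 x2]. unfold Hmul, Hone; cbn [fst snd]. f_equal; [|lia].
  rewrite hom_one' by apply pz_hom. apply gmulg1. Qed.
Lemma HmulV m k x : Hmul m k (Hinv m k x) x = Hone.
Proof. destruct x as [x1 x2]. unfold Hmul, Hinv, Hone; cbn [fst snd]. f_equal; [|lia].
  rewrite <- pz_hom, gmulV. apply hom_one'. apply pz_hom. Qed.
Lemma HmulgV m k (hk : k <= m) x : Hmul m k x (Hinv m k x) = Hone.
Proof. destruct x as [x1 x2]. unfold Hmul, Hinv, Hone; cbn [fst snd]. f_equal; [|lia].
  rewrite <- pz_add by auto. replace (x2 + - x2)%Z with 0%Z by lia. exact (gmulgV FG _). Qed.

Definition H (m k : nat) (hk : k <= m) : group :=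
  Group Ht (Hmul m k) Hone (Hinv m k) (HmulA m k hk) (Hmul1 m k) (Hmulg1 m k) (HmulV m k) (HmulgV m k hk).

Lemma npow_comm (G : group) (x : G) n : gmul (npow x n) x = gmul x (npow x n).
Proof. induction n; simpl. - rewrite gmul1, gmulg1. auto. - rewrite IHn at 1. rewrite <- gmulA. reflexivity. Qed.

Definition rmul {G : group} (x : G) : G -> G := fun y => gmul y x.

Lemma iter_rmul (G : group) (x : G) n y : Nat.iter n (rmul x) y = gmul y (Nat.iter n (rmul x) gone).
Proof. induction n; simpl. - rewrite gmulg1; auto. - unfold rmul at 1 3. rewrite IHn. rewrite gmulA. auto. Qed.

Lemma zpow_zit (G : group) (x : G) z : zpow x z = zit (rmul x) (rmul (ginv x)) z gone.
Proof.
  destruct z as [|p|p]; unfold zit; simpl.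
  - reflexivity.
  - generalize (Pos.to_nat p). intro n. induction n; simpl; auto. rewrite IHn. reflexivity.
  - generalize (Pos.to_nat p). intro n. induction n; simpl. + apply g_inv_one.
    + rewrite <- IHn. unfold rmul at 1. rewrite npow_comm, g_inv_mul. reflexivity.
Qed.

Lemma zit_rmul (G : group) (x : G) z y : zit (rmul x) (rmul (ginv x)) z y = gmul y (zit (rmul x) (rmul (ginv x)) z gone).
Proof. unfold zit. destruct (0 <=? z)%Z; apply iter_rmul. Qed.

Lemma zpow_add (G : group) (x : G) z1 z2 : zpow x (z1 + z2) = gmul (zpow x z2) (zpow x z1).
Proof.
  rewrite !zpow_zit. rewrite zit_add. - apply zit_rmul.
  - intro y. unfold rmul. apply g_canc2. - intro y. unfold rmul. apply g_canc1.
Qed.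

Lemma zpow_1 (G : group) (x : G) : zpow x 1 = x.
Proof. simpl. apply gmul1. Qed.
Lemma zpow_m1 (G : group) (x : G) : zpow x (-1) = ginv x.
Proof. simpl. rewrite gmul1. auto. Qed.

Lemma zpow_succ (G : group) (x : G) z : zpow x (Z.succ z) = gmul (zpow x z) x.
Proof. unfold Z.succ. rewrite Z.add_comm, zpow_add, zpow_1. reflexivity. Qed.
Lemma zpow_succ' (G : group) (x : G) z : zpow x (Z.succ z) = gmul x (zpow x z).
Proof. unfold Z.succ. rewrite zpow_add, zpow_1. reflexivity. Qed.
Lemma zpow_pred' (G : group) (x : G) z : zpow x (Z.pred z) = gmul (ginv x) (zpow x z).
Proof. unfold Z.pred. rewrite zpow_add, zpow_m1. reflexivity. Qed.

Lemma zhom_one (G : group) (f : G -> Z) : (forall x y, f (gmul x y) = (f x + f y)%Z) -> f gone = 0%Z.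
Proof. intro H. pose proof (H gone gone) as E. rewrite gmul1 in E. lia. Qed.
Lemma zhom_inv (G : group) (f : G -> Z) : (forall x y, f (gmul x y) = (f x + f y)%Z) -> forall x, f (ginv x) = (- f x)%Z.
Proof. intros H x. pose proof (H (ginv x) x) as E. rewrite gmulV, zhom_one in E by auto. lia. Qed.
Lemma zhom_zpow (G : group) (f : G -> Z) : (forall x y, f (gmul x y) = (f x + f y)%Z) -> forall x z, f (zpow x z) = (z * f x)%Z.
Proof.
  intros H x z. induction z using Z.peano_ind.
  - simpl. apply zhom_one; auto.
  - rewrite zpow_succ, H, IHz. lia.
  - rewrite zpow_pred', H, zhom_inv, IHz by auto. lia.
Qed.

Definition bb (m k : nat) (hk : k <= m) (n : nat) : H m k hk := (@ginv FG (dd n), 1%Z).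

Lemma Hmul_eq m k hk (w1 w2 : FG) z1 z2 :
  @gmul (H m k hk) (w1, z1) (w2, z2) = (gmul w1 (pz m k z1 w2), (z1 + z2)%Z).
Proof. reflexivity. Qed.
Lemma Hinv_eq m k hk (w : FG) z :
  @ginv (H m k hk) (w, z) = (pz m k (- z) (ginv w), (- z)%Z).
Proof. reflexivity. Qed.
Lemma pz1 m k x : pz m k 1 x = phi m k x.
Proof. reflexivity. Qed.
Lemma pzm1 m k x : pz m k (-1) x = psi m k x.
Proof. reflexivity. Qed.
Lemma pz0 m k x : pz m k 0 x = x.
Proof. reflexivity. Qed.

Lemma ee_S m n : ee m (S n) = gmul (gmul (ee m n) (dd (S n))) (ginv (dd (sg m n))).
Proof. reflexivity. Qed.

Lemma sg_lo m n : n <= m -> sg m n = n.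
Proof. intro H. unfold sg. replace (n <=? m) with true by (symmetry; apply Nat.leb_le; lia). auto. Qed.
Lemma sg_hi m n : m < n -> sg m n = n - m.
Proof. intro H. unfold sg. replace (n <=? m) with false by (symmetry; apply Nat.leb_gt; lia). auto. Qed.

Lemma b_comm_key m k hk n : 1 <= n <= m + k ->
  @gmul (H m k hk) (bb m k hk (sg m n)) (bb m k hk (S n)) = gmul (bb m k hk (S n)) (bb m k hk n).
Proof.
  intro Hn. unfold bb. rewrite !Hmul_eq, !pz1. f_equal.
  rewrite !(hom_inv' FG FG (phi m k)) by apply ev_hom.
  rewrite !phi_dd by lia. rewrite ee_S. gsimpl. reflexivity.
Qed.

Lemma Hrels m k hk : Gmk_rels m k (H m k hk) (bb m k hk).
Proof.
  split.
  - intros i Hi. replace (i + 1) with (S i) by lia.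
    rewrite <- b_comm_key by lia. rewrite sg_lo by lia. reflexivity.
  - intros j Hj. replace (m + j + 1) with (S (m + j)) by lia.
    assert (E := b_comm_key m k hk (m + j) ltac:(lia)). rewrite sg_hi in E by lia.
    replace (m + j - m) with j in E by lia. rewrite <- gmulA, E, gmulA, gmulV, gmul1. reflexivity.
Qed.

Lemma rel_sg m k (G : group) (a : nat -> G) : Gmk_rels m k G a -> forall n, 1 <= n <= m + k ->
  gmul (a (sg m n)) (a (S n)) = gmul (a (S n)) (a n).
Proof.
  intros [R1 R2] n Hn. destruct (Nat.le_gt_cases n m).
  - rewrite sg_lo by lia. replace (S n) with (n + 1) by lia. apply R1. lia.
  - rewrite sg_hi by lia. pose proof (R2 (n - m) ltac:(lia)) as E.
    replace (m + (n - m) + 1) with (S n) in E by lia. replace (m + (n - m)) with n in E by lia.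
    rewrite <- E. gsimpl. reflexivity.
Qed.

Definition tG m k (G : group) (a : nat -> G) (n : nat) : G :=
  if inr m k n then gmul (a 1) (ginv (a n)) else gone.
Definition evG m k (G : group) (a : nat -> G) : FG -> G := ev (tG m k G a).

Lemma evG_dd m k G a n : 1 <= n <= m + k + 1 -> evG m k G a (dd n) = gmul (a 1) (ginv (a n)).
Proof.
  intro Hn. destruct (Nat.eq_dec n 1) as [->|Hn1].
  - rewrite dd01 by lia. unfold evG. rewrite hom_one' by apply ev_hom. rewrite gmulgV. reflexivity.
  - unfold dd. replace (2 <=? n) with true by (symmetry; apply Nat.leb_le; lia).
    unfold evG. rewrite ev_of. unfold tG, inr.
    replace ((2 <=? n) && (n <=? m + k + 1)) with true by (symmetry; apply andb_true_iff; split; apply Nat.leb_le; lia).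
    reflexivity.
Qed.

Lemma evG_ee m k G a : Gmk_rels m k G a -> forall n, 1 <= n <= m + k + 1 ->
  evG m k G a (ee m n) = gmul (gmul (a 1) (gmul (a 1) (ginv (a n)))) (ginv (a 1)).
Proof.
  intros R n. induction n as [|n IH]; intro Hn; [lia|].
  destruct (Nat.eq_dec n 0) as [->|Hn0].
  - cbn [ee]. rewrite !dd01 by lia. unfold evG. rewrite !ev_hom, !hom_inv', !hom_one' by apply ev_hom.
    gsimpl. reflexivity.
  - rewrite ee_S. unfold evG. rewrite !ev_hom, !hom_inv' by apply ev_hom. fold (evG m k G a).
    pose proof (sg_le m n). assert (1 <= sg m n) by (unfold sg; destruct (n <=? m) eqn:E; [|apply Nat.leb_gt in E]; lia).
    rewrite IH, !evG_dd by lia.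
    assert (E : a (sg m n) = gmul (gmul (a (S n)) (a n)) (ginv (a (S n)))).
    { rewrite <- (rel_sg m k G a R n) by lia. gsimpl. reflexivity. }
    rewrite E. gsimpl. reflexivity.
Qed.

Lemma evG_phi m k G a : Gmk_rels m k G a -> forall w,
  evG m k G a (phi m k w) = gmul (gmul (a 1) (evG m k G a w)) (ginv (a 1)).
Proof.
  intros R. apply (ev_unique (fun w => evG m k G a (phi m k w)) (fun w => gmul (gmul (a 1) (evG m k G a w)) (ginv (a 1)))).
  - intros x y. unfold phi, evG. rewrite !ev_hom. reflexivity.
  - intros x y. unfold evG. rewrite ev_hom. gsimpl. reflexivity.
  - intro n. unfold phi at 1. rewrite ev_of. unfold phil.
    unfold evG at 2. rewrite ev_of. unfold tG. destruct (inr m k n) eqn:E.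
    + unfold inr in E. apply andb_true_iff in E. destruct E as [E1 E2]. apply Nat.leb_le in E1, E2.
      apply evG_ee; auto. lia.
    + unfold evG. rewrite ev_of. unfold tG. rewrite E. gsimpl. reflexivity.
Qed.

Lemma evG_psi m k (hk : k <= m) G a : Gmk_rels m k G a -> forall w,
  evG m k G a (psi m k w) = gmul (gmul (ginv (a 1)) (evG m k G a w)) (a 1).
Proof.
  intros R w. rewrite <- (phi_psi m k w hk) at 2. rewrite evG_phi by auto. gsimpl. reflexivity.
Qed.

Lemma evG_pz m k (hk : k <= m) G a : Gmk_rels m k G a -> forall z w,
  evG m k G a (pz m k z w) = gmul (gmul (zpow (a 1) z) (evG m k G a w)) (ginv (zpow (a 1) z)).
Proof.
  intros R z. induction z using Z.peano_ind; intro w.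
  - simpl. rewrite pz0. gsimpl. reflexivity.
  - unfold pz. rewrite zit_succ by (intro; apply phi_psi; auto). fold (pz m k).
    rewrite evG_phi, IHz, zpow_succ' by auto. gsimpl. reflexivity.
  - unfold pz. rewrite zit_pred by (intro; apply psi_phi; auto). fold (pz m k).
    rewrite evG_psi, IHz, zpow_pred' by auto. gsimpl. reflexivity.
Qed.

Definition Theta m k hk (G : group) (a : nat -> G) (x : H m k hk) : G :=
  gmul (evG m k G a (fst x)) (zpow (a 1) (snd x)).

Lemma Theta_hom m k hk G a : Gmk_rels m k G a -> is_hom (H m k hk) G (Theta m k hk G a).
Proof.
  intros R [w1 z1] [w2 z2]. rewrite Hmul_eq. unfold Theta. cbn [fst snd].
  unfold evG at 1. rewrite ev_hom. fold (evG m k G a). rewrite evG_pz by auto.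
  rewrite Z.add_comm, zpow_add. gsimpl. reflexivity.
Qed.

Lemma Theta_bb m k hk G a n : 1 <= n <= m + k + 1 -> Theta m k hk G a (bb m k hk n) = a n.
Proof.
  intro Hn. unfold Theta, bb. cbn [fst snd]. rewrite zpow_1. unfold evG.
  rewrite hom_inv' by apply ev_hom. fold (evG m k G a). rewrite evG_dd by auto. gsimpl. reflexivity.
Qed.

Lemma basis_eq m k (G : group) (a : nat -> G) i : i < m + k ->
  basis m a i = gmul (ginv (a (S (S i)))) (a (sg m (S i))).
Proof.
  intro Hi. unfold basis. destruct (i <? m) eqn:E.
  - apply Nat.ltb_lt in E. unfold Aelt. rewrite sg_lo by lia.
    replace (i + 1 + 1) with (S (S i)) by lia. replace (i + 1) with (S i) by lia. reflexivity.
  - apply Nat.ltb_ge in E. unfold Belt. rewrite sg_hi by lia.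
    replace (m + (i - m + 1) + 1) with (S (S i)) by lia. replace (i - m + 1) with (S i - m) by lia. reflexivity.
Qed.

Lemma basis_eq' m k (G : group) (a : nat -> G) : Gmk_rels m k G a -> forall i, i < m + k ->
  basis m a i = gmul (a (S i)) (ginv (a (S (S i)))).
Proof.
  intros R i Hi. rewrite basis_eq with (k := k) by auto.
  assert (E : a (sg m (S i)) = gmul (gmul (a (S (S i))) (a (S i))) (ginv (a (S (S i))))).
  { rewrite <- (rel_sg m k G a R (S i)) by lia. gsimpl. reflexivity. }
  rewrite E. gsimpl. reflexivity.
Qed.

Lemma sg_pos m n : 1 <= n -> 1 <= sg m n.
Proof. intro H. unfold sg. destruct (n <=? m) eqn:E; [|apply Nat.leb_gt in E]; lia. Qed.

Lemma F_zero m k (G : group) (a : nat -> G) (f : G -> Z) :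
  (forall x y, f (gmul x y) = (f x + f y)%Z) ->
  (forall i, 1 <= i <= m + k + 1 -> f (a i) = 1%Z) ->
  forall x, gen_fam (m + k) (basis m a) x -> f x = 0%Z.
Proof.
  intros Hf Ha x Hx. induction Hx.
  - match goal with Hh : exists _, _ |- _ => destruct Hh as [i [Hi ->]] end. rewrite basis_eq with (k := k) by auto.
    pose proof (sg_le m (S i)). pose proof (sg_pos m (S i)).
    rewrite Hf, zhom_inv, !Ha by (auto; lia).
    lia.
  - apply zhom_one; auto.
  - rewrite Hf. lia.
  - rewrite zhom_inv by auto. lia.
Qed.

Lemma D_in_F m k (G : group) (a : nat -> G) : Gmk_rels m k G a -> forall n, 1 <= n <= m + k + 1 ->
  gen_fam (m + k) (basis m a) (gmul (a 1) (ginv (a n))).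
Proof.
  intros R n. induction n as [|n IH]; intro Hn; [lia|].
  destruct (Nat.eq_dec n 0) as [->|Hn0].
  - rewrite gmulgV. constructor 2.
  - replace (gmul (a 1) (ginv (a (S n)))) with (gmul (gmul (a 1) (ginv (a n))) (basis m a (n - 1))).
    + constructor 3; [apply IH; lia|]. constructor 1. exists (n - 1). split; auto. lia.
    + rewrite basis_eq' with (k := k) by (auto; lia). replace (S (n - 1)) with n by lia.
      replace (S n) with (S (S (n - 1))) by lia. gsimpl. reflexivity.
Qed.

Lemma gprod_S (K : group) (f : nat -> K) n : gprod f (S n) = gmul (gprod f n) (f (S n)).
Proof. reflexivity. Qed.

Definition tK (K : group) (t : nat -> K) (n : nat) : K := gprod (fun i => t (i - 1)) (n - 1).

Lemma chi_dd (K : group) (t : nat -> K) n : 1 <= n -> ev (tK K t) (dd n) = tK K t n.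
Proof.
  intro Hn. destruct (Nat.eq_dec n 1) as [->|Hn1].
  - rewrite dd01 by lia. rewrite hom_one' by apply ev_hom. reflexivity.
  - unfold dd. replace (2 <=? n) with true by (symmetry; apply Nat.leb_le; lia). apply ev_of.
Qed.

Lemma core m k (hm : 1 <= m) (hk : k <= m) (G : group) (a : nat -> G) (HG : presents_Gmk m k G a) :
  let F := gen_fam (m + k) (basis m a) in
  freely_generates (m + k) (basis m a) /\
  (forall g x, F x -> F (gmul (gmul g x) (ginv g))) /\
  (exists f : G -> Z, (forall x y, f (gmul x y) = (f x + f y)%Z) /\
                      forall i, 1 <= i <= m + k + 1 -> f (a i) = 1%Z) /\
  (forall f : G -> Z, (forall x y, f (gmul x y) = (f x + f y)%Z) ->
     (forall i, 1 <= i <= m + k + 1 -> f (a i) = 1%Z) ->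
     forall x, f x = 0%Z <-> F x) /\
  (forall z : Z, zpow (a 1) z = gone -> z = 0%Z) /\
  (forall z : Z, F (zpow (a 1) z) -> zpow (a 1) z = gone) /\
  (forall g : G, exists x z, F x /\ g = gmul x (zpow (a 1) z)).
Proof.
  intro F. destruct HG as [R U].
  destruct (U (H m k hk) (bb m k hk) (Hrels m k hk)) as [[pi [Hpi Hpia]] _].
  assert (ThPi : forall x, Theta m k hk G a (pi x) = x).
  { destruct (U G a R) as [_ Uq]. apply (Uq (fun x => Theta m k hk G a (pi x)) (fun x => x)).
    - intros x y. rewrite Hpi, Theta_hom by auto. reflexivity.
    - intros x y. reflexivity.
    - intros i Hi. rewrite Hpia, Theta_bb by auto. reflexivity.
    - auto. }
  set (sz := fun x => snd (pi x)).
  assert (Hsz : forall x y, sz (gmul x y) = (sz x + sz y)%Z).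
  { intros x y. unfold sz. rewrite Hpi. destruct (pi x), (pi y). reflexivity. }
  assert (Hsza : forall i, 1 <= i <= m + k + 1 -> sz (a i) = 1%Z).
  { intros i Hi. unfold sz. rewrite Hpia by auto. reflexivity. }
  assert (Kchar : forall f : G -> Z, (forall x y, f (gmul x y) = (f x + f y)%Z) ->
     (forall i, 1 <= i <= m + k + 1 -> f (a i) = 1%Z) ->
     forall x, f x = 0%Z <-> F x).
  { intros f Hf Ha x. split.
    - intro Hx. rewrite <- (ThPi x) in Hx |- *. unfold Theta in Hx |- *. destruct (pi x) as [w z] eqn:Epi. cbn [fst snd] in Hx |- *.
      assert (Fw : F (evG m k G a w)).
      { unfold evG. apply ev_in_gen. intro n. unfold tG. destruct (inr m k n) eqn:E.
        - unfold inr in E. apply andb_true_iff in E. destruct E as [E1 E2]. apply Nat.leb_le in E1, E2.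
          apply D_in_F; auto. lia.
        - constructor 2. }
      assert (z = 0%Z).
      { rewrite Hf, zhom_zpow, Ha, (F_zero m k G a f Hf Ha _ Fw) in Hx by (auto; lia). lia. }
      subst z. simpl zpow. rewrite gmulg1. exact Fw.
    - intro Hx. apply (F_zero m k G a f Hf Ha x Hx). }
  assert (Fsz : forall x, F x -> sz x = 0%Z) by (intros; apply (Kchar sz); auto).
  assert (Zinj : forall z : Z, zpow (a 1) z = gone -> z = 0%Z).
  { intros z Hz. assert (E := f_equal sz Hz). rewrite zhom_zpow, Hsza, zhom_one in E by (auto; lia). lia. }
  split; [|split; [|split; [|split; [|split; [|split]]]]].
  -
    intros K t. split.
    + exists (fun x => ev (tK K t) (fst (pi x))). split.
      * intros x y Hx Hy. rewrite Hpi. pose proof (Fsz x Hx) as Ex. pose proof (Fsz y Hy) as Ey.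
        unfold sz in Ex, Ey. destruct (pi x) as [wx zx], (pi y) as [wy zy]. cbn [snd] in Ex, Ey. subst zx zy.
        rewrite Hmul_eq, pz0. cbn [fst]. apply ev_hom.
      * intros i Hi. rewrite basis_eq with (k := k) by auto.
        pose proof (sg_le m (S i)). pose proof (sg_pos m (S i)).
        rewrite Hpi, hom_inv', !Hpia by (auto; lia). unfold bb. rewrite Hinv_eq, Hmul_eq.
        cbn [fst]. rewrite pzm1. replace (- (1))%Z with (-1)%Z by reflexivity. rewrite pzm1.
        unfold psi. rewrite <- (ev_hom (psil m k)). fold (psi m k). rewrite g_inv_inv.
        replace (gmul (dd (S (S i))) (ginv (dd (sg m (S i))))) with (gmul (ginv (ee m (S i))) (ee m (S (S i)))).
        2: { rewrite (ee_S m (S i)). gsimpl. reflexivity. }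
        unfold psi. rewrite ev_hom, hom_inv' by apply ev_hom. fold (psi m k).
        rewrite !psi_ee by (auto; lia). rewrite ev_hom, hom_inv' by apply ev_hom.
        rewrite !chi_dd by lia. unfold tK. replace (S (S i) - 1) with (S (S i - 1)) by lia.
        rewrite gprod_S. replace (S (S i - 1) - 1) with i by lia. gsimpl. reflexivity.
    + intros f1 f2 H1 H2 E1 E2 x Hx. apply (gen_hom_unique G K _ f1 f2 H1 H2); auto.
      intros y [i [Hi ->]]. rewrite E1, E2 by auto. reflexivity.
  -
    intros g x Hx. apply (Kchar sz Hsz Hsza). rewrite !Hsz, zhom_inv, (Fsz x Hx) by auto. lia.
  - exists sz. auto.
  - exact Kchar.
  - exact Zinj.
  - intros z Hz. apply Fsz in Hz. rewrite zhom_zpow, Hsza in Hz by (auto; lia).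
    replace z with 0%Z by lia. reflexivity.
  - intro g. rewrite <- (ThPi g). unfold Theta. exists (evG m k G a (fst (pi g))), (snd (pi g)).
    split; auto. unfold evG. apply ev_in_gen. intro n. unfold tG. destruct (inr m k n) eqn:E.
    + unfold inr in E. apply andb_true_iff in E. destruct E as [E1 E2]. apply Nat.leb_le in E1, E2.
      apply D_in_F; auto. lia.
    + constructor 2.
Qed.

Lemma gprod_A m k (G : group) (a : nat -> G) : Gmk_rels m k G a -> forall i, i <= m ->
  gprod (Aelt a) i = gmul (a 1) (ginv (a (i + 1))).
Proof.
  intros [R1 R2] i. induction i as [|i IH]; intro Hi.
  - simpl. rewrite gmulgV. reflexivity.
  - rewrite gprod_S, IH by lia. unfold Aelt.
    pose proof (R1 (S i) ltac:(lia)) as E. replace (i + 1) with (S i) by lia.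
    replace (S i + 1) with (S (S i)) in * by lia.
    assert (E' : gmul (ginv (a (S (S i)))) (a (S i)) = gmul (a (S i)) (ginv (a (S (S i))))).
    { apply (g_lcancel _ (a (S (S i)))). gsimpl. rewrite <- E. gsimpl. reflexivity. }
    rewrite <- gmulA, E'. gsimpl. reflexivity.
Qed.

Lemma gprod_B m k (G : group) (a : nat -> G) : Gmk_rels m k G a -> forall j, j <= k ->
  gprod (Belt m a) j = gmul (a (m + 1)) (ginv (a (m + j + 1))).
Proof.
  intros [R1 R2] j. induction j as [|j IH]; intro Hj.
  - simpl. replace (m + 0 + 1) with (m + 1) by lia. rewrite gmulgV. reflexivity.
  - rewrite gprod_S, IH by lia. unfold Belt.
    pose proof (R2 (S j) ltac:(lia)) as E.
    replace (m + S j + 1) with (S (m + j + 1)) in * by lia.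
    replace (m + S j) with (m + j + 1) in E by lia.
    assert (E' : gmul (ginv (a (S (m + j + 1)))) (a (S j)) = gmul (a (m + j + 1)) (ginv (a (S (m + j + 1))))).
    { rewrite <- E. gsimpl. reflexivity. }
    rewrite <- gmulA, E'. gsimpl. reflexivity.
Qed.

Lemma mono_A m k (G : group) (a : nat -> G) : Gmk_rels m k G a -> forall i, 1 <= i <= m ->
  conj1 a (Aelt a i) =
  gmul (gmul (gprod (Aelt a) (i - 1)) (Aelt a i)) (ginv (gprod (Aelt a) (i - 1))).
Proof.
  intros R i Hi. rewrite (gprod_A m k G a R) by lia. replace (i - 1 + 1) with i by lia.
  unfold conj1, Aelt. destruct R as [R1 _]. pose proof (R1 i Hi) as E.
  assert (E' : forall w, gmul (ginv (a (i + 1))) (gmul (a i) w) = gmul (a i) (gmul (ginv (a (i + 1))) w)).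
  { assert (EA : gmul (ginv (a (i + 1))) (a i) = gmul (a i) (ginv (a (i + 1)))).
    { apply (g_lcancel _ (a (i + 1))). gsimpl. rewrite <- E. gsimpl. reflexivity. }
    intro w. rewrite gmulA, EA, <- gmulA. reflexivity. }
  gsimpl. rewrite <- !gmulA. rewrite !E'. gsimpl. reflexivity.
Qed.

Lemma mono_B m k (G : group) (a : nat -> G) : k <= m -> Gmk_rels m k G a -> forall j, 1 <= j <= k ->
  conj1 a (Belt m a j) =
  gmul (gmul (gprod (Aelt a) m) (gprod (Belt m a) j)) (ginv (gprod (Aelt a) (j - 1))).
Proof.
  intros hk R j Hj. rewrite !(gprod_A m k G a R) by lia. rewrite (gprod_B m k G a R) by lia.
  replace (j - 1 + 1) with j by lia. unfold conj1, Belt. gsimpl. reflexivity.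
Qed.

Theorem proposition5p4 (m k : nat) (hm : 1 <= m) (hk : k <= m)
  (G : group) (a : nat -> G) (HG : presents_Gmk m k G a)
  (G' : group) (a' : nat -> G') (HG' : presents_Gmk m m G' a') :
  let F := gen_fam (m + k) (basis m a) in
  let F' := gen_fam (m + m) (basis m a') in
  (* the family A_1..A_m, B_1..B_k freely generates F *)
  freely_generates (m + k) (basis m a) /\
  (* F is normal *)
  (forall g x, F x -> F (gmul (gmul g x) (ginv g))) /\
  (* F is the kernel of the homomorphism G -> Z sending every a_i to 1 *)
  (exists f : G -> Z, (forall x y, f (gmul x y) = (f x + f y)%Z) /\
                      forall i, 1 <= i <= m + k + 1 -> f (a i) = 1%Z) /\
  (forall f : G -> Z, (forall x y, f (gmul x y) = (f x + f y)%Z) ->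
     (forall i, 1 <= i <= m + k + 1 -> f (a i) = 1%Z) ->
     forall x, f x = 0%Z <-> F x) /\
  (* G = F ⋊ <a_1>, with <a_1> infinite cyclic *)
  (forall z : Z, zpow (a 1) z = gone -> z = 0%Z) /\
  (forall z : Z, F (zpow (a 1) z) -> zpow (a 1) z = gone) /\
  (forall g : G, exists x z, F x /\ g = gmul x (zpow (a 1) z)) /\
  (* the monodromy phi(x) = a_1 x a_1^{-1} *)
  (forall i, 1 <= i <= m ->
     conj1 a (Aelt a i) =
     gmul (gmul (gprod (Aelt a) (i - 1)) (Aelt a i)) (ginv (gprod (Aelt a) (i - 1)))) /\
  (forall j, 1 <= j <= k ->
     conj1 a (Belt m a j) =
     gmul (gmul (gprod (Aelt a) m) (gprod (Belt m a) j)) (ginv (gprod (Aelt a) (j - 1)))) /\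
  (* phi_{m,k} is the restriction of phi_{m,m} to F_{m+k} <= F_{2m} *)
  (exists iota : G -> G',
     (forall x y, F x -> F y -> iota (gmul x y) = gmul (iota x) (iota y)) /\
     (forall x y, F x -> F y -> iota x = iota y -> x = y) /\
     (forall x, F x -> F' (iota x)) /\
     (forall i, 1 <= i <= m -> iota (Aelt a i) = Aelt a' i) /\
     (forall j, 1 <= j <= k -> iota (Belt m a j) = Belt m a' j) /\
     (forall x, F x -> iota (conj1 a x) = conj1 a' (iota x))).
Proof.
  intros F F'.
  destruct (core m k hm hk G a HG) as [C1 [C2 [C3 [C4 [C5 [C6 C7]]]]]].
  destruct (core m m hm (le_n m) G' a' HG') as [D1 _].
  pose proof HG as [R U]. pose proof HG' as [R' U'].
  split; [exact C1|]. split; [exact C2|]. split; [exact C3|]. split; [exact C4|].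
  split; [exact C5|]. split; [exact C6|]. split; [exact C7|].
  split; [apply (mono_A m k G a R)|]. split; [apply (mono_B m k G a hk R)|].
  assert (R'k : Gmk_rels m k G' a').
  { destruct R' as [R1 R2]. split; auto. intros j Hj. apply R2. lia. }
  destruct (U G' a' R'k) as [[iota [Hi Hia]] _].
  assert (Hib : forall i, i < m + k -> iota (basis m a i) = basis m a' i).
  { intros i Hii. rewrite (basis_eq m k G a i Hii), (basis_eq m m G' a' i ltac:(lia)).
    pose proof (sg_le m (S i)). pose proof (sg_pos m (S i)).
    rewrite Hi, hom_inv', !Hia by (auto; lia). reflexivity. }
  assert (HiF : forall x, F x -> F' (iota x)).
  { intros x Hx. induction Hx.
    - match goal with Hh : exists _, _ |- _ => destruct Hh as [i [Hii ->]] end. rewrite Hib by auto. constructor 1. exists i. split; auto. lia.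
    - rewrite hom_one' by auto. constructor 2.
    - rewrite Hi. constructor 3; auto.
    - rewrite hom_inv' by auto. constructor 4; auto. }
  exists iota. split; [|split; [|split; [|split; [|split]]]].
  - intros x y _ _. apply Hi.
  - destruct (D1 G (fun i => if i <? m + k then basis m a i else gone)) as [[g [Hg Hgb]] _].
    assert (GI : forall x, F x -> g (iota x) = x).
    { intros x Hx. apply (gen_hom_unique G G (fun y => exists i, i < m + k /\ y = basis m a i) (fun x => g (iota x)) (fun x => x)); auto.
      - intros u v Hu Hv. rewrite Hi, Hg; [reflexivity| apply HiF; exact Hu | apply HiF; exact Hv].
      - intros u [i [Hii ->]]. rewrite Hib, Hgb by (auto; lia).
        replace (i <? m + k) with true by (symmetry; apply Nat.ltb_lt; auto). reflexivity. }
    intros x y Hx Hy E. rewrite <- (GI x Hx), <- (GI y Hy), E. reflexivity.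
  - exact HiF.
  - intros i Hii. unfold Aelt. rewrite Hi, hom_inv', !Hia by (auto; lia). reflexivity.
  - intros j Hj. unfold Belt. rewrite Hi, hom_inv', !Hia by (auto; lia). reflexivity.
  - intros x _. unfold conj1. rewrite !Hi, hom_inv', !Hia by (auto; lia). reflexivity.
Qed.
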